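(* Let $\kappa\ge 2$. If $L_1,\dots,L_t$ are Latin squares of order $\kappa$ such that $L_a$ and $L_b$ are projective for all $a\neq b$, then $t \leq \kappa - 1$.
   Context: A Latin square of order $\kappa$ is a $\kappa\times\kappa$ matrix with entries from $\{1,\dots,\kappa\}$ in which each symbol occurs exactly once in each row and each column. Two Latin squares $L_1=[l^{(1)}_{ij}]$ and $L_2=[l^{(2)}_{ij}]$ of order $\kappa$ are called projective if both have all diagonal entries equal to $1$ and, for every row index $r$ and every row index $s$, there is exactly one column index $c$ with $l^{(1)}_{rc} = l^{(2)}_{sc}$. *)

(* Defs.v *)
From mathcomp Require Import all_boot.
Set Implicit Arguments. Unset Strict Implicit. Unset Printing Implicit Defensive.

(* Symbols {1,...,k} are represented by 'I_k, symbol s+1 being encoded as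
   ordinal s; in particular the paper's symbol 1 is the ordinal 0. *)
Definition square (k : nat) := 'I_k -> 'I_k -> 'I_k.

Definition latin_square (k : nat) (L : square k) : Prop :=
  (forall r s, exists! c, L r c = s) /\ (forall c s, exists! r, L r c = s).

Definition unit_diagonal (k : nat) (L : square k) : Prop :=
  forall i : 'I_k, nat_of_ord (L i i) = 0.

Definition projective (k : nat) (L1 L2 : square k) : Prop :=
  unit_diagonal L1 /\ unit_diagonal L2 /\
  (forall r s : 'I_k, exists! c : 'I_k, L1 r c = L2 s c).

(* Main.v *)
Require Import Defs.
From mathcomp Require Import all_boot.

Theorem theorem27 (k t : nat) (L : 'I_t -> square k) :
  2 <= k ->
  (forall a, latin_square (L a)) ->
  (forall a b, a != b -> projective (L a) (L b)) ->
  t <= k - 1.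
Proof.
move=> hk Hlat Hproj.
have h0 : 0 < k by apply: leq_trans hk.
pose i0 := Ordinal h0. pose c1 := Ordinal hk.
have c10 : c1 != i0 by [].
pose f := fun a => L a i0 c1.
have finj : injective f.
  move=> a b Hab; apply/eqP; apply/negPn/negP => nab.
  have [d1 [d2 Hp]] := Hproj a b nab. have [c [_ Hu]] := Hp i0 i0.
  have e1 : L a i0 i0 = L b i0 i0 by apply: val_inj; rewrite /= d1 d2.
  have := Hu _ e1; have := Hu _ Hab => E1 E2.
  by rewrite -E1 E2 eqxx in c10.
have fne : forall a, f a != L a i0 i0.
  move=> a; apply/negP => /eqP Ha.
  have [[Hr _] _] := (Hlat a, Hlat a).
  have [c [_ Hu]] := Hr i0 (L a i0 i0).
  have := Hu _ (erefl _); have := Hu _ Ha => E1 E2.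
  by rewrite -E1 E2 eqxx in c10.
case: t L Hlat Hproj f finj fne => [|t'] L Hlat Hproj f finj fne; first by [].
have Hd : forall a b : 'I_t'.+1, L a i0 i0 = L b i0 i0.
  move=> a b; case: (eqVneq a b) => [->//|nab].
  have [d1 [d2 _]] := Hproj a b nab; apply: val_inj; by rewrite /= d1 d2.
have -> : t'.+1 = #|[set f a | a in 'I_t'.+1]|.
  by rewrite card_imset // card_ord.
rewrite -[in X in _ <= X](card_ord k) subn1 -(cardC1 (L ord0 i0 i0)).
apply: subset_leq_card; apply/subsetP => x /imsetP [a _ ->].
by rewrite !inE -(Hd a) fne.
Qed.
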